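(* Let $\alpha>0$ and define, for $\varrho\in[0,1]$, \[ \Xi(\varrho)=-S(\varrho)+\varrho\log\pi_1(\alpha\varrho)+(1-\varrho)\log\pi_1\bigl(\alpha(1-\varrho)\bigr)-\alpha\varrho(1-\varrho). \] Then $\Xi$ is continuous on $[0,1]$, symmetric about $\varrho=1/2$ (i.e. $\Xi(\varrho)=\Xi(1-\varrho)$), strictly convex on $[0,1]$, and consequently $\Xi(\varrho)<\Xi(0)$ for all $\varrho\in(0,1)$. Moreover, the function $G(\eta)=\eta\log\frac{1-\mathrm{e}^{-\eta}}{\eta}$ satisfies $G''(\eta)+1>0$ for all $\eta>0$.
   Context: $S(\varrho)=\varrho\log\varrho+(1-\varrho)\log(1-\varrho)$ with the convention $0\log0=0$; $\pi_1(x)=1-\mathrm{e}^{-x}$; the terms $\varrho\log\pi_1(\alpha\varrho)$ and $(1-\varrho)\log\pi_1(\alpha(1-\varrho))$ are interpreted as $0$ at $\varrho=0$ and $\varrho=1$ respectively. *)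

(* Defs.v *)
From Stdlib Require Import Reals.
From Coquelicot Require Import Coquelicot.
Open Scope R_scope.

Definition xlogx (x : R) : R := if Req_EM_T x 0 then 0 else x * ln x.
Definition S_ent (rho : R) : R := xlogx rho + xlogx (1 - rho).

Definition pi1 (x : R) : R := 1 - exp (- x).

Definition term_a (alpha rho : R) : R :=
  if Req_EM_T rho 0 then 0 else rho * ln (pi1 (alpha * rho)).

Definition term_b (alpha rho : R) : R :=
  if Req_EM_T rho 1 then 0 else (1 - rho) * ln (pi1 (alpha * (1 - rho))).

Definition Xi (alpha rho : R) : R :=
  - S_ent rho + term_a alpha rho + term_b alpha rho - alpha * rho * (1 - rho).

Definition G (eta : R) : R := eta * ln ((1 - exp (- eta)) / eta).

Definition unit_interval (x : R) : Prop := 0 <= x <= 1.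

(* Main.v *)
Require Import Defs.
From Stdlib Require Import Reals Lra.
From Coquelicot Require Import Coquelicot.
Open Scope R_scope.

Lemma MVT_open (f f' : R -> R) a b : a < b ->
  (forall c, a < c < b -> derivable_pt_lim f c (f' c)) ->
  (forall c, a <= c <= b -> continuity_pt f c) ->
  exists c, a < c < b /\ f b - f a = f' c * (b - a).
Proof.
intros hab hd hc.
pose (pr1 := fun c (H : a < c < b) => exist (fun l => derivable_pt_lim f c l) (f' c) (hd c H)).
pose (pr2 := fun c (_ : a < c < b) => derivable_pt_id c).
destruct (MVT f id a b pr1 pr2 hab hc) as [c [P HP]].
{ intros; apply derivable_continuous_pt, derivable_pt_id. }
exists c; split; auto.
rewrite (derive_pt_eq_0 f c (f' c) (pr1 c P) (hd c P)) in HP.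
rewrite (derive_pt_eq_0 id c 1 (pr2 c P) (derivable_pt_lim_id c)) in HP.
unfold id in HP. lra.
Qed.

Definition G1 (y : R) : R := ln ((1 - exp (- y)) / y) + y / (exp y - 1) - 1.
Definition G2 (y : R) : R := 2 / (exp y - 1) - 1 / y - y * exp y / (exp y - 1) ^ 2.

Lemma expgt1 y : 0 < y -> 1 < exp y.
Proof. intros; rewrite <- exp_0; apply exp_increasing; lra. Qed.

Lemma ratio_pos y : 0 < y -> 0 < (1 - exp (- y)) / y.
Proof.
intros hy. apply Rdiv_lt_0_compat; auto.
assert (exp (-y) < 1). { rewrite <- exp_0; apply exp_increasing; lra. } lra.
Qed.

Lemma G_deriv y : 0 < y -> is_derive G y (G1 y).
Proof.
intros hy. pose proof (ratio_pos y hy). pose proof (expgt1 y hy).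
unfold G, G1. auto_derive.
- split; [lra | auto].
- rewrite exp_Ropp.
  replace ((1 + - / exp y) * / y) with ((1 - /exp y)/y) by (unfold Rdiv; ring).
  set (LL := ln _). set (u := exp y) in *.
  assert (hu : /u < 1). { rewrite <- Rinv_1. apply Rinv_lt_contravar; lra. }
  field. repeat split; try lra.
Qed.

Lemma G1_deriv y : 0 < y -> is_derive G1 y (G2 y).
Proof.
intros hy. pose proof (ratio_pos y hy). pose proof (expgt1 y hy).
unfold G1, G2. auto_derive.
- repeat split; try lra; auto.
- rewrite exp_Ropp.
  set (u := exp y) in *.
  assert (hu : /u < 1). { rewrite <- Rinv_1. apply Rinv_lt_contravar; lra. }
  field. repeat split; try lra.
Qed.

Definition Qf (y : R) : R := y * (exp y - exp (- y)) - (exp y + exp (- y)) + 2 - y ^ 2.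

Lemma Qf_deriv y : is_derive Qf y (y * (exp y + exp (- y) - 2)).
Proof. unfold Qf. auto_derive; auto. ring. Qed.

Lemma Qf_pos y : 0 < y -> 0 < Qf y.
Proof.
intros hy.
destruct (MVT_open Qf (fun y => y * (exp y + exp (- y) - 2)) 0 y hy) as [c [hc e]].
- intros c _. apply is_derive_Reals, Qf_deriv.
- intros c _. apply derivable_continuous_pt. exists (c * (exp c + exp (- c) - 2)).
  apply is_derive_Reals, Qf_deriv.
- assert (Qf 0 = 0). { unfold Qf. rewrite Ropp_0, exp_0. ring. }
  assert (1 < exp c) by (apply expgt1; lra).
  assert (0 < exp c + exp (- c) - 2).
  { rewrite exp_Ropp. set (u := exp c) in *.
    replace (u + / u - 2) with ((u - 1) ^ 2 / u) by (field; lra).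
    apply Rdiv_lt_0_compat; [|lra]. apply pow_lt. lra. }
  assert (0 < c * (exp c + exp (- c) - 2) * (y - 0)).
  { apply Rmult_lt_0_compat; [apply Rmult_lt_0_compat|]; lra. }
  lra.
Qed.

Lemma G2_pos y : 0 < y -> G2 y + 1 > 0.
Proof.
intros hy. pose proof (Qf_pos y hy) as hq. pose proof (expgt1 y hy).
unfold Qf in hq. rewrite exp_Ropp in hq. unfold G2.
set (u := exp y) in *.
assert (e : 2 / (u - 1) - 1 / y - y * u / (u - 1) ^ 2 + 1
  = (y * (u - / u) - (u + / u) + 2 - y ^ 2) * u / (y * (u - 1) ^ 2)).
{ field. split; lra. }
rewrite e. apply Rlt_gt. apply Rdiv_lt_0_compat.
- apply Rmult_lt_0_compat; lra.
- apply Rmult_lt_0_compat; [lra|]. apply pow_lt; lra.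
Qed.

Definition phi (y : R) : R := if Req_EM_T y 0 then 1 else (1 - exp (- y)) / y.

Lemma phi_cont0 : continuous phi 0.
Proof.
apply continuity_pt_filterlim.
assert (hd : derivable_pt_lim (fun x => 1 - exp (- x)) 0 1).
{ apply is_derive_Reals. auto_derive; auto. rewrite Ropp_0, exp_0. ring. }
unfold continuity_pt, continue_in, limit1_in, limit_in. intros eps heps.
destruct (hd eps heps) as [d hdd]. exists d. split; [apply cond_pos|].
intros x [[_ hx] hxd]. simpl in *. unfold R_dist in *.
unfold phi. destruct (Req_EM_T x 0) as [e|ne]; [lra|].
destruct (Req_EM_T 0 0) as [_|ne2]; [|lra].
specialize (hdd x (not_eq_sym hx)). rewrite Rminus_0_r in hxd.
specialize (hdd hxd).
replace (0 + x) with x in hdd by ring. rewrite Ropp_0, exp_0 in hdd.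
replace ((1 - exp (- x) - (1 - 1)) / x) with ((1 - exp (- x)) / x) in hdd by (unfold Rdiv; ring).
exact hdd.
Qed.

Lemma G_cont y : 0 <= y -> continuous G y.
Proof.
intros hy. destruct (Req_dec y 0) as [e|ne].
- subst y.
  apply (continuous_ext (fun x => x * ln (phi x))).
  { intros x. unfold G, phi. destruct (Req_EM_T x 0) as [e|ne].
    - subst. change (0 * ln 1 = 0 * ln ((1 - exp (-0))/0)); ring.
    - reflexivity. }
  apply (continuous_mult (fun x => x) (fun x => ln (phi x))).
  + apply continuous_id.
  + apply (continuous_comp phi ln). apply phi_cont0.
    apply continuous_ln. unfold phi. destruct (Req_EM_T 0 0); lra.
- apply (ex_derive_continuous (K:=R_AbsRing) (V:=R_NormedModule)). exists (G1 y). apply G_deriv. lra.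
Qed.

Definition K (y : R) : R := G y + y ^ 2 / 2.
Definition K1 (y : R) : R := G1 y + y.

Lemma K_deriv y : 0 < y -> is_derive K y (K1 y).
Proof.
intros hy. unfold K, K1.
apply (is_derive_plus G (fun y => y ^ 2 / 2)). apply G_deriv; auto.
auto_derive; auto. field.
Qed.

Lemma K1_deriv y : 0 < y -> is_derive K1 y (G2 y + 1).
Proof.
intros hy. unfold K1.
apply (is_derive_plus G1 (fun y => y)). apply G1_deriv; auto.
auto_derive; auto.
Qed.

Lemma K_cont y : 0 <= y -> continuity_pt K y.
Proof.
intros hy. apply continuity_pt_filterlim. unfold K.
apply (continuous_plus G (fun y => y ^ 2 / 2)). apply G_cont; auto.
apply (ex_derive_continuous (K:=R_AbsRing) (V:=R_NormedModule)). auto_derive; auto.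
Qed.

Lemma K1_incr a b : 0 < a -> a < b -> K1 a < K1 b.
Proof.
intros ha hab.
destruct (MVT_open K1 (fun y => G2 y + 1) a b hab) as [c [hc e]].
- intros c hc. apply is_derive_Reals, K1_deriv. lra.
- intros c hc. apply derivable_continuous_pt. exists (G2 c + 1).
  apply is_derive_Reals, K1_deriv. lra.
- pose proof (G2_pos c ltac:(lra)).
  assert (0 < (G2 c + 1) * (b - a)) by (apply Rmult_lt_0_compat; lra). lra.
Qed.

Lemma K_conv_lt x y t : 0 <= x -> x < y -> 0 < t < 1 ->
  K (t * x + (1 - t) * y) < t * K x + (1 - t) * K y.
Proof.
intros hx hxy ht.
set (z := t * x + (1 - t) * y).
assert (hz1 : x < z) by (unfold z; nra).
assert (hz2 : z < y) by (unfold z; nra).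
destruct (MVT_open K K1 x z hz1) as [c1 [hc1 e1]].
- intros c hc. apply is_derive_Reals, K_deriv. lra.
- intros c hc. apply K_cont. lra.
destruct (MVT_open K K1 z y hz2) as [c2 [hc2 e2]].
- intros c hc. apply is_derive_Reals, K_deriv. lra.
- intros c hc. apply K_cont. lra.
pose proof (K1_incr c1 c2 ltac:(lra) ltac:(lra)).
assert (ez1 : z - x = (1 - t) * (y - x)) by (unfold z; ring).
assert (ez2 : y - z = t * (y - x)) by (unfold z; ring).
rewrite ez1 in e1. rewrite ez2 in e2.
assert (0 < t * (1 - t) * (y - x) * (K1 c2 - K1 c1)).
{ repeat apply Rmult_lt_0_compat; lra. }
nra.
Qed.

Lemma K_conv x y t : 0 <= x -> 0 <= y -> x <> y -> 0 < t < 1 ->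
  K (t * x + (1 - t) * y) < t * K x + (1 - t) * K y.
Proof.
intros hx hy hxy ht. destruct (Rlt_or_le x y).
- apply K_conv_lt; auto.
- pose proof (K_conv_lt y x (1 - t) hy ltac:(lra) ltac:(lra)).
  replace (t * x + (1 - t) * y) with ((1 - t) * y + (1 - (1 - t)) * x) by ring.
  lra.
Qed.

Lemma pi1_pos y : 0 < y -> 0 < pi1 y.
Proof. intros; unfold pi1. assert (exp (-y) < 1). { rewrite <- exp_0; apply exp_increasing; lra. } lra. Qed.

Lemma G_form y : 0 < y -> G y = y * (ln (pi1 y) - ln y).
Proof.
intros hy. pose proof (pi1_pos y hy). unfold G. unfold pi1 in *. unfold Rdiv.
assert (0 < / y) by (apply Rinv_0_lt_compat; auto).
rewrite ln_mult by auto. rewrite ln_Rinv by auto. ring.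
Qed.

Definition Psi (alpha rho : R) : R :=
  ln alpha - alpha / 2 + (K (alpha * rho) + K (alpha * (1 - rho))) / alpha.

Lemma Xi_rep alpha rho : 0 < alpha -> 0 <= rho <= 1 -> Xi alpha rho = Psi alpha rho.
Proof.
intros ha hr. unfold Xi, S_ent, xlogx, term_a, term_b, Psi, K.
assert (hG0 : G 0 = 0) by (unfold G; ring).
destruct (Req_dec rho 0) as [e0|n0].
- subst rho.
  repeat match goal with |- context[if ?c then _ else _] => destruct c; try lra end.
  rewrite !Rmult_0_r. replace (1 - 0) with 1 by ring. rewrite !Rmult_1_r.
  rewrite (G_form alpha ha), ln_1, hG0. field. lra.
- destruct (Req_dec rho 1) as [e1|n1].
  + subst rho.
    repeat match goal with |- context[if ?c then _ else _] => destruct c; try lra end.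
    replace (1 - 1) with 0 by ring. rewrite !Rmult_0_r, !Rmult_1_r.
    rewrite (G_form alpha ha), ln_1, hG0. field. lra.
  + repeat match goal with |- context[if ?c then _ else _] => destruct c; try lra end.
    assert (h1 : 0 < alpha * rho) by (apply Rmult_lt_0_compat; lra).
    assert (h2 : 0 < alpha * (1 - rho)) by (apply Rmult_lt_0_compat; lra).
    rewrite (G_form _ h1), (G_form _ h2).
    rewrite (ln_mult alpha rho) by lra. rewrite (ln_mult alpha (1 - rho)) by lra.
    field. lra.
Qed.

Lemma Psi_cont alpha x : 0 < alpha -> 0 <= x <= 1 -> continuous (Psi alpha) x.
Proof.
intros ha hx. unfold Psi.
assert (hlin : forall a b, continuous (fun r : R => a + b * r) x).
{ intros a b. apply (ex_derive_continuous (K:=R_AbsRing) (V:=R_NormedModule)).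
  auto_derive; auto. }
assert (hK : forall a b, 0 <= a + b * x -> continuous (fun r : R => K (a + b * r)) x).
{ intros a b h. apply (continuous_comp (fun r : R => a + b * r) K). apply hlin.
  apply continuity_pt_filterlim, K_cont. auto. }
apply (continuous_plus (fun _ : R => ln alpha - alpha / 2)
   (fun r : R => (K (alpha * r) + K (alpha * (1 - r))) / alpha)).
- apply continuous_const.
- apply (continuous_mult (fun r : R => K (alpha * r) + K (alpha * (1 - r))) (fun _ => / alpha)).
  + apply (continuous_plus (fun r : R => K (alpha * r)) (fun r => K (alpha * (1 - r)))).
    * apply (continuous_ext (fun r : R => K (0 + alpha * r))).
      { intros; f_equal; ring. }
      apply hK. nra.
    * apply (continuous_ext (fun r : R => K (alpha + (- alpha) * r))).
      { intros; f_equal; ring. }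
      apply hK. nra.
  + apply continuous_const.
Qed.

Theorem mainTheorem14 (alpha : R) (halpha : 0 < alpha) :
  continuous_on unit_interval (Xi alpha)
  /\ (forall rho, 0 <= rho <= 1 -> Xi alpha rho = Xi alpha (1 - rho))
  /\ (forall x y t, 0 <= x <= 1 -> 0 <= y <= 1 -> x <> y -> 0 < t < 1 ->
        Xi alpha (t * x + (1 - t) * y) < t * Xi alpha x + (1 - t) * Xi alpha y)
  /\ (forall rho, 0 < rho < 1 -> Xi alpha rho < Xi alpha 0)
  /\ (forall eta, 0 < eta -> ex_derive G eta)
  /\ (forall eta, 0 < eta ->
        ex_derive (Derive G) eta /\ Derive (Derive G) eta + 1 > 0).
Proof.
assert (hsym : forall rho, 0 <= rho <= 1 -> Xi alpha rho = Xi alpha (1 - rho)).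
{ intros rho hr. rewrite !Xi_rep by (auto; lra). unfold Psi.
  replace (1 - (1 - rho)) with rho by ring. field. lra. }
assert (hconv : forall x y t, 0 <= x <= 1 -> 0 <= y <= 1 -> x <> y -> 0 < t < 1 ->
        Xi alpha (t * x + (1 - t) * y) < t * Xi alpha x + (1 - t) * Xi alpha y).
{ intros x y t hx hy hxy ht.
  rewrite !Xi_rep by (auto; nra). unfold Psi.
  assert (h1 := K_conv (alpha * x) (alpha * y) t ltac:(nra) ltac:(nra)
                 ltac:(intro h; apply hxy; nra) ht).
  assert (h2 := K_conv (alpha * (1 - x)) (alpha * (1 - y)) t ltac:(nra) ltac:(nra)
                 ltac:(intro h; apply hxy; nra) ht).
  replace (alpha * (t * x + (1 - t) * y)) with (t * (alpha * x) + (1 - t) * (alpha * y)) by ring.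
  replace (alpha * (1 - (t * x + (1 - t) * y)))
    with (t * (alpha * (1 - x)) + (1 - t) * (alpha * (1 - y))) by ring.
  set (Z1 := K (t * (alpha * x) + (1 - t) * (alpha * y))) in *.
  set (Z2 := K (t * (alpha * (1 - x)) + (1 - t) * (alpha * (1 - y)))) in *.
  set (X1 := K (alpha * x)) in *. set (Y1 := K (alpha * y)) in *.
  set (X2 := K (alpha * (1 - x))) in *. set (Y2 := K (alpha * (1 - y))) in *.
  assert (hp : 0 < (t * X1 + (1 - t) * Y1 - Z1 + (t * X2 + (1 - t) * Y2 - Z2)) / alpha).
  { apply Rdiv_lt_0_compat; lra. }
  match goal with |- ?L < ?R =>
    assert (e : R - L = (t * X1 + (1 - t) * Y1 - Z1 + (t * X2 + (1 - t) * Y2 - Z2)) / alpha)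
      by (field; lra) end.
  lra. }
split; [|split; [exact hsym|split; [exact hconv|split; [|split]]]].
- apply (continuous_on_ext unit_interval (Psi alpha)).
  { intros x hx. symmetry. apply Xi_rep; auto. }
  apply continuous_on_forall. intros x hx. apply Psi_cont; auto.
- intros rho hr.
  assert (h := hconv 0 1 (1 - rho) ltac:(lra) ltac:(lra) ltac:(lra) ltac:(lra)).
  replace ((1 - rho) * 0 + (1 - (1 - rho)) * 1) with rho in h by ring.
  rewrite (hsym 1 ltac:(lra)) in h. replace (1 - 1) with 0 in h by ring. lra.
- intros eta he. exists (G1 eta). apply G_deriv; auto.
- intros eta he.
  assert (hl : locally eta (fun t => G1 t = Derive G t)).
  { apply filter_imp with (fun t => 0 < t).
    - intros t ht. symmetry. apply is_derive_unique, G_deriv; auto.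
    - apply (open_gt 0); auto. }
  split.
  + apply (ex_derive_ext_loc G1). exact hl. exists (G2 eta). apply G1_deriv; auto.
  + rewrite <- (Derive_ext_loc G1 (Derive G) eta hl).
    rewrite (is_derive_unique G1 eta (G2 eta)) by (apply G1_deriv; auto).
    apply G2_pos; auto.
Qed.
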